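(* Let $\alpha\ge1$ and let $\Phi_\alpha^*(\xi)=\sup_{z\in\mathbb R}\{\xi z-\Phi_\alpha(z)\}$ be the Legendre transform of $\Phi_\alpha$. With $\tilde c_\alpha:=\big(\tfrac{2}{\alpha^2}\big)^{1/(\alpha-1)}\tfrac{\alpha-1}{\alpha}$ (for $\alpha>1$), for all $\xi\in\mathbb R$: (1) if $\alpha=1$: $\Phi_1^*(\xi)\le e^{\xi}-\xi-1$; (2) if $\alpha\in(1,2]$: $\Phi_\alpha^*(\xi)\le\max\big\{\tilde c_\alpha|\xi|^{\alpha/(\alpha-1)},\tfrac1{2\alpha}\xi^2\big\}$; (3) if $\alpha\ge2$: $\Phi_\alpha^*(\xi)\le\tilde c_\alpha|\xi|^{\alpha/(\alpha-1)}$. Moreover, for all $\alpha\ge1$, $\Phi_\alpha^*(\xi)\le\frac1{2\alpha}\xi^2$ whenever $|\xi|\le\alpha$.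
   Context: For $\alpha\ge1$, $\Phi_\alpha(z)=\big((z+1)^\alpha-1\big)\log\big((z+1)^\alpha\big)$ for $z>-1$ and $\Phi_\alpha(z)=+\infty$ for $z\le-1$. *)

(* Defs.v *)
From HB Require Import structures.
From mathcomp Require Import all_boot all_order all_algebra.
From mathcomp Require Import all_classical all_reals all_analysis.
Set Implicit Arguments. Unset Strict Implicit. Unset Printing Implicit Defensive.
Import Order.TTheory GRing.Theory Num.Theory.
Local Open Scope ring_scope.

Definition Phi {R : realType} (alpha z : R) : \bar R :=
  if -1 < z then ((((z + 1) `^ alpha) - 1) * ln ((z + 1) `^ alpha))%:E
  else +oo%E.

Definition Phistar {R : realType} (alpha xi : R) : \bar R :=
  ereal_sup [set ((xi * z)%:E - Phi alpha z)%E | z in [set: R]]%classic.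

Definition ctilde {R : realType} (alpha : R) : R :=
  (2 / alpha ^+ 2) `^ (1 / (alpha - 1)) * ((alpha - 1) / alpha).

(* Main.v *)
Require Import Defs.
From HB Require Import structures.
From mathcomp Require Import all_boot all_order all_algebra.
From mathcomp Require Import all_classical all_reals all_analysis.
From mathcomp Require Import ring lra.
Import Order.TTheory GRing.Theory Num.Theory.
Local Open Scope ring_scope.

Section S.
Variable R : realType.
Implicit Types u z alpha : R.

Lemma ln_lb u : 0 < u -> 1 - u^-1 <= ln u.
Proof.
move=> u0; have h := @le_ln1Dx R (u^-1 - 1).
have hi : 0 < u^-1 by rewrite invr_gt0.
have : -1 < u^-1 - 1 by lra.
move/h; rewrite addrC subrK lnV ?posrE //; lra.
Qed.

Lemma ln_ub u : 0 < u -> ln u <= u - 1.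
Proof.
move=> u0; have := @le_ln1Dx R (u - 1).
by rewrite addrCA subrr addr0; apply; lra.
Qed.

Lemma lowq alpha z : 1 <= alpha -> -1 < z -> z <= 1 ->
  alpha * z ^+ 2 / 2 <= ((z + 1) `^ alpha - 1) * (alpha * ln (z + 1)).
Proof.
move=> ha hz1 hz2; have u0 : 0 < z + 1 by lra.
have [z0|z0] := leP z 0.
  have h1 : (z + 1) `^ alpha <= z + 1 by apply: ge1r_powR => //; apply/andP; split; lra.
  have h2 := ln_ub (z+1) u0.
  set P := (z + 1) `^ alpha in h1 *; set l := ln (z + 1) in h2 *.
  have e1 : 0 <= (P - 1 - z) * l by apply: mulr_le0; lra.
  have e2 : 0 <= z * (l - z) by apply: mulr_le0; lra.
  have e3 : z ^+ 2 <= (P - 1) * l by rewrite expr2; lra.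
  have e4 : 0 <= (alpha - 1) * ((P - 1) * l - z^+2) by apply: mulr_ge0; lra.
  have e5 : 0 <= z ^+ 2 by apply: sqr_ge0.
  nra.
have h1 : z + 1 <= (z + 1) `^ alpha by apply: le1r_powR => //; lra.
have h2 := ln_lb (z+1) u0.
have hw : (z + 1) * (z + 1)^-1 = 1 by rewrite mulfV // gt_eqF.
have hw0 : 0 < (z + 1)^-1 by rewrite invr_gt0.
have h3 : z / 2 <= ln (z + 1) by nra.
set P := (z + 1) `^ alpha in h1 *; set l := ln (z + 1) in h3 *.
have e1 : 0 <= (P - 1 - z) * l by apply: mulr_ge0; lra.
have e2 : 0 <= z * (l - z / 2) by apply: mulr_ge0; lra.
have e3 : z ^+ 2 / 2 <= (P - 1) * l by rewrite expr2; lra.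
have e4 : 0 <= (alpha - 1) * ((P - 1) * l - z^+2 / 2) by apply: mulr_ge0; lra.
have e5 : 0 <= z ^+ 2 by apply: sqr_ge0.
nra.
Qed.

Lemma lowlin alpha z : 1 <= alpha -> 1 <= z ->
  alpha * z - alpha / 2 <= ((z + 1) `^ alpha - 1) * (alpha * ln (z + 1)).
Proof.
move=> ha hz; have u0 : 0 < z + 1 by lra.
have h1 : z + 1 <= (z + 1) `^ alpha by apply: le1r_powR => //; lra.
have hln2 : 1 / 2 <= ln (2 : R).
  have := ln_lb 2 ltac:(lra). rewrite (_ : 1 - 2^-1 = 1/2) //; lra.
have hsplit : ln (z + 1) = ln 2 + ln ((z + 1) / 2).
  by rewrite -lnM ?posrE ?divr_gt0 // mulrC divfK // pnatr_eq0.
have h2 := ln_lb ((z + 1) / 2) ltac:(by rewrite divr_gt0).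
rewrite invf_div in h2.
have hw : (z + 1) * (z + 1)^-1 = 1 by rewrite mulfV // gt_eqF.
have hw0 : 0 < (z + 1)^-1 by rewrite invr_gt0.
have h3 : z - 1/2 <= z * ln (z + 1).
  rewrite hsplit.
  set w := (z + 1)^-1 in hw hw0 h2.
  have hzw : 0 <= ((z + 1) / 2 - 2 * z * w) * (z + 1).
    have -> : ((z + 1) / 2 - 2 * z * w) * (z + 1) = (z - 1) ^+ 2 / 2.
      have e : z * ((z + 1) * w) = z by rewrite hw mulr1.
      rewrite expr2; lra.
    by apply: divr_ge0 => //; apply: sqr_ge0.
  have hzw2 : 0 <= (z + 1) / 2 - 2 * z * w.
    by move: hzw; rewrite pmulr_lge0.
  have e1 : z * (1/2 + (1 - 2 * w)) <= z * (ln 2 + ln ((z + 1) / 2)).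
    apply: ler_wpM2l; first lra. rewrite mulrC -/w in h2. lra.
  nra.
have l0 : 0 <= ln (z + 1) by apply: ln_ge0; lra.
set P := (z + 1) `^ alpha in h1 *; set l := ln (z + 1) in h3 l0 *.
have e1 : 0 <= (P - 1 - z) * l by apply: mulr_ge0; lra.
have e3 : z - 1/2 <= (P - 1) * l by lra.
have e4 : 0 <= (alpha - 1) * ((P - 1) * l - (z - 1/2)) by apply: mulr_ge0; lra.
nra.
Qed.

Lemma lowpow alpha z : 1 <= alpha -> 1 <= z ->
  alpha / 2 * z `^ alpha <= ((z + 1) `^ alpha - 1) * (alpha * ln (z + 1)).
Proof.
move=> ha hz; have u0 : 0 < z + 1 by lra.
have hP : (z + 1) * (z + 1) `^ (alpha - 1) = (z + 1) `^ alpha.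
  by apply: mulr_powRB1; lra.
have hZ : z * z `^ (alpha - 1) = z `^ alpha.
  by apply: mulr_powRB1; lra.
have hq : z `^ (alpha - 1) <= (z + 1) `^ (alpha - 1).
  by apply: ge0_ler_powR; rewrite ?nnegrE; lra.
have hq1 : 1 <= z `^ (alpha - 1).
  have h0 : 0 <= alpha - 1 by lra.
  by have := ler_powR hz h0; rewrite powRr0.
have h2 := ln_lb (z+1) u0.
have hw : (z + 1) * (z + 1)^-1 = 1 by rewrite mulfV // gt_eqF.
have hw0 : 0 < (z + 1)^-1 by rewrite invr_gt0.
have hl : 1/2 <= ln (z + 1) by nra.
rewrite -hP -hZ.
set q := z `^ (alpha - 1) in hq hq1 *; set Q := (z + 1) `^ (alpha - 1) in hq *.
set l := ln (z + 1) in hl *.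
have e1 : z * q <= (z + 1) * Q - 1 by nra.
have e0 : 0 <= z * q by nra.
have e2 : z * q / 2 <= ((z + 1) * Q - 1) * l by nra.
nra.
Qed.

Lemma young alpha xi z : 1 < alpha ->
  xi * z <= alpha / 2 * `|z| `^ alpha + ctilde alpha * `|xi| `^ (alpha / (alpha - 1)).
Proof.
move=> ha.
have a0 : 0 < alpha by lra.
have a10 : 0 < alpha - 1 by lra.
set q := alpha / (alpha - 1).
have q0 : 0 < q by rewrite divr_gt0.
set lam := (alpha ^+ 2 / 2) `^ (alpha^-1).
set mu := (2 / alpha ^+ 2) `^ (alpha^-1).
have hc : 0 < alpha ^+ 2 / 2 by rewrite divr_gt0 // exprn_gt0.
have hc' : 0 < 2 / alpha ^+ 2 by rewrite divr_gt0 // exprn_gt0.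
have lm : lam * mu = 1.
  have hA : 0 < alpha ^+ 2 by rewrite exprn_gt0.
  rewrite /lam /mu -powRM ?ltW // mulrA divfK ?gt_eqF // divff ?gt_eqF //.
  by rewrite powR1.
have lamA : lam `^ alpha = alpha ^+ 2 / 2.
  by rewrite /lam -powRrM mulVf ?gt_eqF // powRr1 // ltW.
have muq : mu `^ q = (2 / alpha ^+ 2) `^ (1 / (alpha - 1)).
  by rewrite /mu -powRrM /q; congr (_ `^ _); field; rewrite ?gt_eqF.
have pq : alpha^-1 + q^-1 = 1.
  by rewrite /q invf_div; field; rewrite gt_eqF.
have lam0 : 0 <= lam by apply: powR_ge0.
have mu0 : 0 <= mu by apply: powR_ge0.
have := @conjugate_powR R (`|z| * lam) (`|xi| * mu) alpha q
  (mulr_ge0 (normr_ge0 _) lam0) (mulr_ge0 (normr_ge0 _) mu0) a0 q0 pq.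
rewrite !powRM ?normr_ge0 // lamA muq.
have -> : `|z| * lam * (`|xi| * mu) = `|xi| * `|z|.
  by rewrite mulrC -mulrA (mulrCA mu) (mulrC mu) lm mulr1 mulrC.
move=> h; apply: le_trans (ler_norm _) _; rewrite normrM.
apply: (le_trans h); rewrite /ctilde.
apply: lerD.
  rewrite le_eqVlt; apply/orP; left; apply/eqP; field; rewrite gt_eqF //.
rewrite le_eqVlt; apply/orP; left; apply/eqP; rewrite /q invf_div; field.
by rewrite gt_eqF.
Qed.

Lemma phi1 xi z : -1 < z ->
  xi * z - ((z + 1) `^ 1 - 1) * (1 * ln (z + 1)) <= expR xi - xi - 1.
Proof.
move=> hz; have u0 : 0 < z + 1 by lra.
rewrite powRr1 ?(ltW u0) // mul1r.
have hl := ln_ub (z + 1) u0.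
have e := expR_ge1Dx (xi - ln (z + 1)).
have eE : expR xi = (z + 1) * expR (xi - ln (z + 1)).
  by rewrite -{1}(subrK (ln (z + 1)) xi) expRD lnK ?posrE // mulrC.
have e2 : (z + 1) * (1 + (xi - ln (z + 1))) <= expR xi.
  by rewrite eE; apply: ler_wpM2l; lra.
set l := ln (z + 1) in hl e e2 eE *.
lra.
Qed.

Lemma sq_bound alpha xi z : 0 < alpha ->
  xi * z - alpha * z ^+ 2 / 2 <= xi ^+ 2 / (2 * alpha).
Proof.
move=> a0.
have h : 0 <= (xi - alpha * z) ^+ 2 / (2 * alpha).
  by apply: divr_ge0; [apply: sqr_ge0 | lra].
have -> : xi ^+ 2 / (2 * alpha) = (xi - alpha * z) ^+ 2 / (2 * alpha) + (xi * z - alpha * z ^+ 2 / 2).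
  by field; rewrite gt_eqF.
lra.
Qed.

End S.

Lemma Phistar_le (R : realType) (alpha xi B : R) :
  (forall z : R, -1 < z ->
     xi * z - ((z + 1) `^ alpha - 1) * (alpha * ln (z + 1)) <= B) ->
  (Phistar alpha xi <= B%:E)%E.
Proof.
move=> H; apply: ge_ereal_sup => _ [z _ <-].
rewrite /Phi; case: ifPn => hz.
  by rewrite -EFinB lee_fin ln_powR; exact: H.
by rewrite /= leNye.
Qed.

Lemma pow_le_sq (R : realType) (alpha z : R) : 2 <= alpha -> `|z| <= 1 ->
  `|z| `^ alpha <= z ^+ 2.
Proof.
move=> ha hz.
have [->|nz] := eqVneq z 0.
  by rewrite normr0 powR0 ?expr0n //= gt_eqF //; lra.
have hz0 : 0 < `|z| by rewrite normr_gt0.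
have := @ger_powR R `|z| ltac:(by apply/andP) 2 alpha ha.
by rewrite powR_mulrn ?normr_ge0 // real_normK ?num_real.
Qed.

Theorem mainTheorem8 (R : realType) (alpha : R) (ha : 1 <= alpha) :
  (alpha = 1 -> forall xi : R, (Phistar alpha xi <= (expR xi - xi - 1)%:E)%E) /\
  (1 < alpha <= 2 -> forall xi : R,
     (Phistar alpha xi <=
       (Num.max (ctilde alpha * `|xi| `^ (alpha / (alpha - 1)))
                (xi ^+ 2 / (2 * alpha)))%:E)%E) /\
  (2 <= alpha -> forall xi : R,
     (Phistar alpha xi <= (ctilde alpha * `|xi| `^ (alpha / (alpha - 1)))%:E)%E) /\
  (forall xi : R, `|xi| <= alpha ->
     (Phistar alpha xi <= (xi ^+ 2 / (2 * alpha))%:E)%E).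
Proof.
have a0 : 0 < alpha by lra.
split; [|split; [|split]].
- move=> -> xi; apply: Phistar_le => z hz; exact: (@phi1 R).
- move=> /andP[a1 _] xi; apply: Phistar_le => z hz.
  have [hz1|hz1] := leP z 1.
    have h1 := @lowq R alpha z ha hz hz1.
    have h2 := @sq_bound R alpha xi z a0.
    rewrite le_max; apply/orP; right; lra.
  have hz1' : 1 <= z by lra.
  have h1 := @lowpow R alpha z ha hz1'.
  have h2 := @young R alpha xi z a1.
  rewrite ger0_norm in h2; last lra.
  rewrite le_max; apply/orP; left; lra.
- move=> a2 xi; apply: Phistar_le => z hz.
  have a1 : 1 < alpha by lra.
  have h2 := @young R alpha xi z a1.
  have [hz1|hz1] := leP z 1.
    have h1 := @lowq R alpha z ha hz hz1.
    have h3 : `|z| `^ alpha <= z ^+ 2.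
      by apply: pow_le_sq => //; rewrite ler_norml; apply/andP; split; lra.
    have h4 : alpha / 2 * `|z| `^ alpha <= alpha * z ^+ 2 / 2.
      rewrite mulrAC; apply: ler_wpM2r; [lra | apply: ler_wpM2l; lra].
    lra.
  have hz1' : 1 <= z by lra.
  have h1 := @lowpow R alpha z ha hz1'.
  rewrite ger0_norm in h2; last lra.
  lra.
- move=> xi hxi; apply: Phistar_le => z hz.
  have [hz1|hz1] := leP z 1.
    have h1 := @lowq R alpha z ha hz hz1.
    have h2 := @sq_bound R alpha xi z a0.
    lra.
  have hz1' : 1 <= z by lra.
  have h1 := @lowlin R alpha z ha hz1'.
  have hx : xi <= alpha by apply: le_trans (ler_norm _) hxi.
  have e1 : 0 <= (alpha - xi) * (z - 1) by apply: mulr_ge0; lra.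
  have e2 : 0 <= (xi - alpha) ^+ 2 / (2 * alpha).
    by apply: divr_ge0; [apply: sqr_ge0 | lra].
  have -> : xi ^+ 2 / (2 * alpha) = (xi - alpha) ^+ 2 / (2 * alpha) + (xi - alpha / 2).
    by field; rewrite gt_eqF.
  nra.
Qed.
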